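(* $\mathsf{Seq}$ interprets $\mathsf{Seq}^+$.
   Context: $\mathsf{Seq}$ is the theory in the language $\{e,\vdash,\circ\}$ ($e$ constant, $\vdash$ and $\circ$ binary functions) with axioms: ($\mathsf{Seq}_1$) $\forall xy[x\vdash y\neq e]$; ($\mathsf{Seq}_2$) $\forall x_1x_2y_1y_2[x_1\vdash x_2=y_1\vdash y_2\rightarrow(x_1=y_1\wedge x_2=y_2)]$; ($\mathsf{Seq}_3$) $\forall x[x\circ e=x]$; ($\mathsf{Seq}_4$) $\forall xyz[x\circ(y\vdash z)=(x\circ y)\vdash z]$; ($\mathsf{Seq}_5$) $\forall x[x=e\vee\exists yz[x=y\vdash z]]$. $\mathsf{Seq}^+$ is the theory in the same language with axioms $\mathsf{Seq}_1,\ldots,\mathsf{Seq}_5$ together with ($\mathsf{Seq}^*_3$) $\forall x[x\circ e=x\wedge e\circ x=x]$, ($\mathsf{Seq}^*_5$) $\forall xyzw[x\circ y=z\circ w\leftrightarrow\exists u[(z=x\circ u\wedge u\circ w=y)\vee(x=z\circ u\wedge u\circ y=w)]]$, and ($\mathsf{Seq}^+_c$) $\forall xyz[(x\circ y=x\circ z\vee y\circ x=z\circ x)\rightarrow y=z]$. *)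

(* Defs.v *)
(* First-order syntax for the language {e, |-, o},
   Tarski semantics, and (multi-dimensional, parameter-free) relative
   interpretations between theories in this language, stated
   semantically (via the completeness theorem: "T proves phi" is read
   as "phi holds in every model of T"). *)
From Stdlib Require Import Arith.

Inductive term : Type :=
  | tvar (n : nat)
  | te
  | tvd (s t : term)   (* s |- t *)
  | tci (s t : term).  (* s o t  *)

Inductive form : Type :=
  | fEq (s t : term)
  | fBot
  | fImp (A B : form)
  | fAnd (A B : form)
  | fOr (A B : form)
  | fAll (n : nat) (A : form)
  | fEx (n : nat) (A : form).

Section Semantics.
Variables (M : Type) (eM : M) (vdM ciM : M -> M -> M).

Fixpoint eval (rho : nat -> M) (t : term) : M :=
  match t with
  | tvar n => rho n
  | te => eM
  | tvd s u => vdM (eval rho s) (eval rho u)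
  | tci s u => ciM (eval rho s) (eval rho u)
  end.

Definition upd (rho : nat -> M) (n : nat) (a : M) : nat -> M :=
  fun k => if Nat.eqb k n then a else rho k.

Fixpoint sat (rho : nat -> M) (A : form) : Prop :=
  match A with
  | fEq s t => eval rho s = eval rho t
  | fBot => False
  | fImp A B => sat rho A -> sat rho B
  | fAnd A B => sat rho A /\ sat rho B
  | fOr A B => sat rho A \/ sat rho B
  | fAll n A => forall a : M, sat (upd rho n a) A
  | fEx n A => exists a : M, sat (upd rho n a) A
  end.

(** Environment for m-dimensional tuples x, y, z : the variables
    0..m-1 denote x, m..2m-1 denote y, 2m..3m-1 denote z; all other
    variables are assigned the (definable) constant e. *)
Definition env3 (m : nat) (x y z : nat -> M) : nat -> M :=
  fun k => if Nat.ltb k m then x k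
           else if Nat.ltb k (2 * m) then y (k - m)
           else if Nat.ltb k (3 * m) then z (k - 2 * m)
           else eM.

Definition dflt : nat -> M := fun _ => eM.
End Semantics.

(** * Theories in the language, presented by their axioms,
    evaluated in a "setoid structure" (A, eqv, e, |-, o) in which the
    symbol = is read as eqv.  A genuine structure is the case eqv = eq. *)

Definition Seq_ax (A : Type) (eqv : A -> A -> Prop) (e : A)
    (vd ci : A -> A -> A) : Prop :=
  (forall x y, ~ eqv (vd x y) e) /\
  (forall x1 x2 y1 y2, eqv (vd x1 x2) (vd y1 y2) -> eqv x1 y1 /\ eqv x2 y2) /\
  (forall x, eqv (ci x e) x) /\
  (forall x y z, eqv (ci x (vd y z)) (vd (ci x y) z)) /\
  (forall x, eqv x e \/ exists y z, eqv x (vd y z)).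

Definition SeqPlus_ax (A : Type) (eqv : A -> A -> Prop) (e : A)
    (vd ci : A -> A -> A) : Prop :=
  Seq_ax A eqv e vd ci /\
  (forall x, eqv (ci x e) x /\ eqv (ci e x) x) /\
  (forall x y z w, eqv (ci x y) (ci z w) <->
     exists u, (eqv z (ci x u) /\ eqv (ci u w) y) \/
               (eqv x (ci z u) /\ eqv (ci u y) w)) /\
  (forall x y z, (eqv (ci x y) (ci x z) \/ eqv (ci y x) (ci z x)) -> eqv y z).

Definition theory := forall A : Type, (A -> A -> Prop) -> A ->
  (A -> A -> A) -> (A -> A -> A) -> Prop.

(** An m-dimensional (parameter-free) translation: a domain formula
    (free variables 0..m-1), a formula for the translated equality
    (x: 0..m-1, y: m..2m-1), a formula for the graph of e (x), and
    formulas for the graphs of |- and o  (z = x |- y, z = x o y with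
    x, y, z in the three blocks of variables). *)
Record translation : Type := {
  dim : nat;
  tr_dom : form;
  tr_eq : form;
  tr_e : form;
  tr_vd : form;
  tr_ci : form }.

Section Interpretation.
Variables (I : translation) (M : Type) (eM : M) (vdM ciM : M -> M -> M).

Let m := dim I.
Let S3 (A : form) (x y z : nat -> M) := sat M eM vdM ciM (env3 M eM m x y z) A.
Let d := dflt M eM.

Definition iDom (x : nat -> M) : Prop := S3 (tr_dom I) x d d.
Definition iEq (x y : nat -> M) : Prop := S3 (tr_eq I) x y d.
Definition iE (x : nat -> M) : Prop := S3 (tr_e I) x d d.
Definition iVd (x y z : nat -> M) : Prop := S3 (tr_vd I) x y z.
Definition iCi (x y z : nat -> M) : Prop := S3 (tr_ci I) x y z.

Definition iD : Type := { x : nat -> M | iDom x }.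
Definition iEqD (x y : iD) : Prop := iEq (proj1_sig x) (proj1_sig y).

Definition defines_model_of (U : theory) : Prop :=
  (forall x, iDom x -> iEq x x) /\
  (forall x y, iDom x -> iDom y -> iEq x y -> iEq y x) /\
  (forall x y z, iDom x -> iDom y -> iDom z -> iEq x y -> iEq y z -> iEq x z) /\
  (forall x x', iDom x -> iDom x' -> iEq x x' -> iE x -> iE x') /\
  (forall x x' y y' z z', iDom x -> iDom x' -> iDom y -> iDom y' ->
     iDom z -> iDom z' -> iEq x x' -> iEq y y' -> iEq z z' ->
     iVd x y z -> iVd x' y' z') /\
  (forall x x' y y' z z', iDom x -> iDom x' -> iDom y -> iDom y' ->
     iDom z -> iDom z' -> iEq x x' -> iEq y y' -> iEq z z' ->
     iCi x y z -> iCi x' y' z') /\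
  (forall x x', iDom x -> iDom x' -> iE x -> iE x' -> iEq x x') /\
  (forall x y z z', iDom x -> iDom y -> iDom z -> iDom z' ->
     iVd x y z -> iVd x y z' -> iEq z z') /\
  (forall x y z z', iDom x -> iDom y -> iDom z -> iDom z' ->
     iCi x y z -> iCi x y z' -> iEq z z') /\
  exists (e0 : iD) (vd0 ci0 : iD -> iD -> iD),
    iE (proj1_sig e0) /\
    (forall x y, iVd (proj1_sig x) (proj1_sig y) (proj1_sig (vd0 x y))) /\
    (forall x y, iCi (proj1_sig x) (proj1_sig y) (proj1_sig (ci0 x y))) /\
    U iD iEqD e0 vd0 ci0.
End Interpretation.

(** T interprets U: there is a single translation which, in every model
    of T, defines a model of U (equivalently, by completeness, T proves
    the translations of the axioms of U and the well-definedness
    conditions of the translation). *)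
Definition interprets (T U : theory) : Prop :=
  exists I : translation,
    forall (M : Type) (eM : M) (vdM ciM : M -> M -> M),
      T M (@eq M) eM vdM ciM -> defines_model_of I M eM vdM ciM U.

(* Main.v *)
Require Import Defs.
From Stdlib Require Import Arith.

Section Sem.
Variables (M : Type) (e : M) (vd ci : M -> M -> M).

Definition PB (y : M) := forall a c : M, ci (ci a c) y = ci a (ci c y).
Definition PA (y : M) := ci e y = y.
Definition PR (y : M) := forall a c : M, ci a y = ci c y -> a = c.
Definition PIn (w t : M) := exists p q : M, t = ci (vd p w) q.
Definition PLt (t : M) := forall a w : M,
  (PIn w (ci a t) -> PIn w a \/ PIn w t) /\ (PIn w a \/ PIn w t -> PIn w (ci a t)).
Definition PC (w : M) := forall x z y : M, PB y -> ci x y = ci z w ->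
  exists u : M, PB u /\ ((z = ci x u /\ ci u w = y) \/ (x = ci z u /\ ci u y = w)).
Definition PH (x : M) := forall W : M, PB W -> forall U : M, ci (ci x W) U = x -> W = e.
Definition PK0 (q : M) := PA q /\ PB q /\ PC q /\ PR q /\ PLt q.
Definition PK (q : M) := PK0 q /\ forall p : M, PH p -> PH (ci p q).
Definition PD (x : M) := forall p q : M, PB q -> ci p q = x -> PK p.
Definition PF (x : M) := PD x /\ exists s : M, PD s /\ (forall w : M, PIn w x -> PIn w s) /\
  (forall w : M, PIn w s -> PD w /\ forall v : M, PIn v w -> PIn v s).

Hypothesis s1 : forall x y, vd x y <> e.
Hypothesis s2 : forall x1 x2 y1 y2, vd x1 x2 = vd y1 y2 -> x1 = y1 /\ x2 = y2.
Hypothesis s3 : forall x, ci x e = x.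
Hypothesis s4 : forall x y z, ci x (vd y z) = vd (ci x y) z.
Hypothesis s5 : forall x, x = e \/ exists y z, x = vd y z.

Lemma ci_ne (x y z : M) : ci x (vd y z) <> e.
Proof. rewrite s4; apply s1. Qed.

Lemma B_e : PB e. Proof. intros a c; rewrite !s3; reflexivity. Qed.
Lemma B_vd y a : PB y -> PB (vd y a).
Proof. intros H b c; rewrite !s4, H; reflexivity. Qed.
Lemma B_dn y a : PB (vd y a) -> PB y.
Proof. intros H b c; specialize (H b c); rewrite !s4 in H; apply s2 in H; tauto. Qed.
Lemma B_ci p q : PB p -> PB q -> PB (ci p q).
Proof. intros Hp Hq a b. rewrite <- (Hq (ci a b) p), Hp, Hq, Hq. reflexivity. Qed.

Lemma A_e : PA e. Proof. apply s3. Qed.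
Lemma A_vd y a : PA y -> PA (vd y a).
Proof. unfold PA; intros H; rewrite s4, H; reflexivity. Qed.
Lemma A_ci p q : PB q -> PA p -> PA (ci p q).
Proof. unfold PA; intros Hq Hp; rewrite <- Hq, Hp; reflexivity. Qed.

Lemma R_e : PR e. Proof. intros a c; rewrite !s3; auto. Qed.
Lemma R_vd y b : PR y -> PR (vd y b).
Proof. intros H a c E; rewrite !s4 in E; apply s2 in E; apply H; tauto. Qed.
Lemma R_ci p q : PB q -> PR p -> PR q -> PR (ci p q).
Proof. intros Bq Rp Rq a c E. rewrite <- !Bq in E. apply Rp, Rq, E. Qed.

Lemma In_e w : ~ PIn w e.
Proof.
  intros [p [q E]]. destruct (s5 q) as [->|[q1 [c ->]]].
  - rewrite s3 in E; symmetry in E; eapply s1; eauto.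
  - symmetry in E; eapply ci_ne; eauto.
Qed.

Lemma In_vd w y z : PIn w (vd y z) <-> w = z \/ PIn w y.
Proof.
  split.
  - intros [p [q E]]. destruct (s5 q) as [->|[q1 [c ->]]].
    + rewrite s3 in E. apply s2 in E. left; symmetry; tauto.
    + rewrite s4 in E. apply s2 in E. right. exists p, q1. tauto.
  - intros [->|[p [q ->]]].
    + exists y, e. rewrite s3; reflexivity.
    + exists p, (vd q z). rewrite s4; reflexivity.
Qed.

Lemma Lt_e : PLt e.
Proof. intros a w; rewrite s3; split; intros H; [tauto|]. destruct H as [H|H]; [exact H| exfalso; eapply In_e; eauto]. Qed.

Lemma Lt_vd t c : PLt t -> PLt (vd t c).
Proof.
  intros H a w. rewrite s4, !In_vd. destruct (H a w). tauto.
Qed.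

Lemma Lt_ci t1 t2 : PB t2 -> PLt t1 -> PLt t2 -> PLt (ci t1 t2).
Proof.
  intros B2 L1 L2 a w. rewrite <- B2. destruct (L2 (ci a t1) w), (L2 t1 w), (L1 a w). tauto.
Qed.

Lemma C_e : PC e.
Proof.
  intros x z y By E. rewrite s3 in E. exists y. split; [exact By|]. left. split; auto.
Qed.

Lemma C_vd w a : PB w -> PC w -> PC (vd w a).
Proof.
  intros Bw Cw x z y By E. rewrite s4 in E.
  destruct (s5 y) as [->|[y1 [b ->]]].
  - exists (vd w a). split; [apply B_vd; auto|]. right. rewrite s3 in E. rewrite s3, s4. auto.
  - rewrite s4 in E. apply s2 in E. destruct E as [E ->].
    destruct (Cw x z y1 (B_dn _ _ By) E) as [u [Bu [[E1 E2]|[E1 E2]]]].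
    + exists u; split; auto. left. rewrite s4, E2. auto.
    + exists u; split; auto. right. rewrite s4, E2. auto.
Qed.

Lemma C_ci p q : PB p -> PB q -> PC p -> PC q -> PC (ci p q).
Proof.
  intros Bp Bq Cp Cq x z y By E. rewrite <- Bq in E.
  destruct (Cq x (ci z p) y By E) as [u1 [Bu1 [[E1 E2]|[E1 E2]]]].
  - symmetry in E1. destruct (Cp x z u1 Bu1 E1) as [u2 [Bu2 [[F1 F2]|[F1 F2]]]].
    + exists u2. split; auto. left. split; auto. rewrite <- Bq, F2; auto.
    + exists u2. split; auto. right. split; auto. rewrite <- E2, <- Bq, F2; auto.
  - exists (ci p u1). split; [apply B_ci; auto|]. right. split.
    + rewrite E1, Bu1; reflexivity.
    + rewrite By, E2; reflexivity.
Qed.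

Lemma pre_ne a W : ci (vd e a) W <> e.
Proof.
  destruct (s5 W) as [->|[W1 [c ->]]].
  - rewrite s3; apply s1.
  - apply ci_ne.
Qed.

Lemma H_e : PH e.
Proof.
  intros W BW U E. destruct (s5 U) as [->|[U1 [c ->]]].
  - rewrite s3 in E. destruct (s5 W) as [->|[W1 [c ->]]]; auto.
    exfalso; eapply ci_ne; eauto.
  - exfalso; eapply ci_ne; eauto.
Qed.

Lemma H_vd x a : PH x -> PH (vd x a).
Proof.
  intros Hx.
  assert (key : forall W, PB W -> ci (vd x a) W = ci x (ci (vd e a) W)).
  { intros W BW. rewrite <- BW, s4, s3. reflexivity. }
  assert (BV : forall W, PB W -> PB (ci (vd e a) W)).
  { intros W BW. apply B_ci; auto. apply B_vd, B_e. }
  intros W BW U E. destruct (s5 U) as [->|[U1 [c ->]]].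
  - rewrite s3 in E. destruct (s5 W) as [->|[W1 [c ->]]]; auto.
    rewrite s4 in E. apply s2 in E. destruct E as [E _].
    pose proof (B_dn _ _ BW) as BW1.
    rewrite key in E by exact BW1.
    exfalso. apply (pre_ne a W1). apply (Hx _ (BV _ BW1) e). rewrite s3. exact E.
  - rewrite s4 in E. apply s2 in E. destruct E as [E _].
    rewrite key in E by exact BW.
    exfalso. apply (pre_ne a W). apply (Hx _ (BV _ BW) U1). exact E.
Qed.

Lemma K_e : PK e.
Proof.
  split.
  - split; [|split; [|split; [|split]]]; [apply A_e|apply B_e|apply C_e|apply R_e|apply Lt_e].
  - intros p Hp. rewrite s3. exact Hp.
Qed.

Lemma K_vd q a : PK q -> PK (vd q a).
Proof.
  intros [[Aq [Bq [Cq [Rq Lq]]]] Hq]. split.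
  - split; [|split; [|split; [|split]]]; [apply A_vd|apply B_vd|apply C_vd|apply R_vd|apply Lt_vd]; auto.
  - intros p Hp. rewrite s4. apply H_vd, Hq, Hp.
Qed.

Lemma K_ci p q : PK p -> PK q -> PK (ci p q).
Proof.
  intros [[Ap [Bp [Cp [Rp Lp]]]] Hp] [[Aq [Bq [Cq [Rq Lq]]]] Hq]. split.
  - split; [|split; [|split; [|split]]]; [apply A_ci|apply B_ci|apply C_ci|apply R_ci|apply Lt_ci]; auto.
  - intros r Hr. rewrite <- Bq. apply Hq, Hp, Hr.
Qed.

Lemma K_H q : PK q -> PH q.
Proof.
  intros [[Aq _] Hq]. unfold PA in Aq. rewrite <- Aq. apply Hq, H_e.
Qed.

Lemma K_B q : PK q -> PB q. Proof. intros [[_ [B _]] _]; exact B. Qed.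
Lemma K_A q : PK q -> PA q. Proof. intros [[A _] _]; exact A. Qed.
Lemma K_C q : PK q -> PC q. Proof. intros [[_ [_ [C _]]] _]; exact C. Qed.
Lemma K_R q : PK q -> PR q. Proof. intros [[_ [_ [_ [R _]]]] _]; exact R. Qed.
Lemma K_Lt q : PK q -> PLt q. Proof. intros [[_ [_ [_ [_ L]]]] _]; exact L. Qed.

Lemma D_K x : PD x -> PK x.
Proof. intros H. apply (H x e B_e (s3 x)). Qed.

Lemma D_e : PD e.
Proof.
  intros p q Bq E. destruct (s5 q) as [->|[q1 [c ->]]].
  - rewrite s3 in E; subst; apply K_e.
  - exfalso; eapply ci_ne; eauto.
Qed.

Lemma D_vd y a : PD y -> PD (vd y a).
Proof.
  intros Dy p q Bq E. destruct (s5 q) as [->|[q1 [c ->]]].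
  - rewrite s3 in E; subst. apply K_vd, D_K, Dy.
  - rewrite s4 in E. apply s2 in E. destruct E as [E _].
    apply (Dy p q1 (B_dn _ _ Bq) E).
Qed.

Lemma D_dn y a : PD (vd y a) -> PD y.
Proof.
  intros Dy p q Bq E. apply (Dy p (vd q a) (B_vd _ _ Bq)). rewrite s4, E; reflexivity.
Qed.

Lemma D_ci x y : PD x -> PD y -> PD (ci x y).
Proof.
  intros Dx Dy p q Bq E.
  destruct (K_C _ (D_K _ Dy) p x q Bq E) as [u [Bu [[E1 E2]|[E1 E2]]]].
  - apply (Dx p u Bu). symmetry; exact E1.
  - subst p. apply K_ci; [apply D_K, Dx|]. apply (Dy u q Bq E2).
Qed.

Lemma D_pre y u w : PD y -> PB w -> ci u w = y -> PD u.
Proof.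
  intros Dy Bw E p q Bq E2. apply (Dy p (ci q w) (B_ci _ _ Bq Bw)).
  rewrite <- Bw, E2. exact E.
Qed.

Lemma in_ci_l t a w : PLt t -> PIn w a -> PIn w (ci a t).
Proof. intros L H. apply (L a w). auto. Qed.
Lemma in_ci_r t a w : PLt t -> PIn w t -> PIn w (ci a t).
Proof. intros L H. apply (L a w). auto. Qed.
Lemma in_ci_inv t a w : PLt t -> PIn w (ci a t) -> PIn w a \/ PIn w t.
Proof. intros L H. apply (L a w). auto. Qed.

Lemma F_e : PF e.
Proof.
  split; [apply D_e|]. exists e. split; [apply D_e|]. split.
  - intros w H; exact H.
  - intros w H; exfalso; eapply In_e; eauto.
Qed.

Lemma F_D x : PF x -> PD x. Proof. intros [H _]; exact H. Qed.

Lemma F_vd y z : PF y -> PF z -> PF (vd y z).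
Proof.
  intros [Dy [sy [Dsy [Ly Cy]]]] [Dz [sz [Dsz [Lz Cz]]]].
  pose proof (K_Lt _ (D_K _ Dsz)) as Lsz.
  split; [apply D_vd; auto|]. exists (vd (ci sy sz) z). split; [apply D_vd, D_ci; auto|].
  split.
  - intros w Hw. apply In_vd in Hw. apply In_vd. destruct Hw as [->|Hw]; [left; auto|].
    right. apply in_ci_l; auto.
  - intros w Hw. apply In_vd in Hw. destruct Hw as [->|Hw].
    + split; auto. intros v Hv. apply In_vd. right. apply in_ci_r; auto.
    + apply in_ci_inv in Hw; auto. destruct Hw as [Hw|Hw].
      * destruct (Cy w Hw) as [Dw Lw]. split; auto. intros v Hv. apply In_vd; right.
        apply in_ci_l; auto.
      * destruct (Cz w Hw) as [Dw Lw]. split; auto. intros v Hv. apply In_vd; right.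
        apply in_ci_r; auto.
Qed.

Lemma F_ci x y : PF x -> PF y -> PF (ci x y).
Proof.
  intros [Dx [sx [Dsx [Lx Cx]]]] [Dy [sy [Dsy [Ly Cy]]]].
  pose proof (K_Lt _ (D_K _ Dsy)) as Lsy.
  pose proof (K_Lt _ (D_K _ Dy)) as Ly'.
  split; [apply D_ci; auto|]. exists (ci sx sy). split; [apply D_ci; auto|].
  split.
  - intros w Hw. apply in_ci_inv in Hw; auto. destruct Hw as [Hw|Hw].
    + apply in_ci_l; auto.
    + apply in_ci_r; auto.
  - intros w Hw. apply in_ci_inv in Hw; auto. destruct Hw as [Hw|Hw].
    + destruct (Cx w Hw) as [Dw Lw]. split; auto. intros v Hv. apply in_ci_l; auto.
    + destruct (Cy w Hw) as [Dw Lw]. split; auto. intros v Hv. apply in_ci_r; auto.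
Qed.

Lemma F_dnl y z : PF (vd y z) -> PF y.
Proof.
  intros [Dy [s [Ds [L C]]]]. split; [eapply D_dn; eauto|]. exists s. split; auto. split; auto.
  intros w Hw. apply L, In_vd. auto.
Qed.

Lemma F_dnr y z : PF (vd y z) -> PF z.
Proof.
  intros [Dy [s [Ds [L C]]]].
  assert (Hz : PIn z s) by (apply L, In_vd; auto).
  destruct (C z Hz) as [Dz Lz]. split; auto. exists s. auto.
Qed.

Lemma F_pre y u w : PF y -> PF w -> ci u w = y -> PF u.
Proof.
  intros [Dy [s [Ds [L C]]]] Fw E.
  pose proof (D_K _ (F_D _ Fw)) as Kw.
  split; [apply (D_pre y u w Dy (K_B _ Kw) E)|].
  exists s. split; auto. split; auto.
  intros v Hv. apply L. rewrite <- E. apply in_ci_l; auto. apply K_Lt; auto.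
Qed.

End Sem.

Definition V := tvar.
Definition fB (t : term) (b : nat) : form :=
  fAll b (fAll (b+1) (fEq (tci (tci (V b) (V (b+1))) t) (tci (V b) (tci (V (b+1)) t)))).
Definition fA (t : term) : form := fEq (tci te t) t.
Definition fR (t : term) (b : nat) : form :=
  fAll b (fAll (b+1) (fImp (fEq (tci (V b) t) (tci (V (b+1)) t)) (fEq (V b) (V (b+1))))).
Definition fIn (w t : term) (b : nat) : form :=
  fEx b (fEx (b+1) (fEq t (tci (tvd (V b) w) (V (b+1))))).
Definition fLt (t : term) (b : nat) : form :=
  fAll b (fAll (b+1) (fAnd
    (fImp (fIn (V (b+1)) (tci (V b) t) (b+2)) (fOr (fIn (V (b+1)) (V b) (b+2)) (fIn (V (b+1)) t (b+2))))
    (fImp (fOr (fIn (V (b+1)) (V b) (b+2)) (fIn (V (b+1)) t (b+2))) (fIn (V (b+1)) (tci (V b) t) (b+2))))).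
Definition fC (t : term) (b : nat) : form :=
  fAll b (fAll (b+1) (fAll (b+2) (fImp (fB (V (b+2)) (b+3))
    (fImp (fEq (tci (V b) (V (b+2))) (tci (V (b+1)) t))
      (fEx (b+3) (fAnd (fB (V (b+3)) (b+4))
        (fOr (fAnd (fEq (V (b+1)) (tci (V b) (V (b+3)))) (fEq (tci (V (b+3)) t) (V (b+2))))
             (fAnd (fEq (V b) (tci (V (b+1)) (V (b+3)))) (fEq (tci (V (b+3)) (V (b+2))) t))))))))).
Definition fH (t : term) (b : nat) : form :=
  fAll b (fImp (fB (V b) (b+1)) (fAll (b+1) (fImp (fEq (tci (tci t (V b)) (V (b+1))) t) (fEq (V b) te)))).
Definition fK0 (t : term) (b : nat) : form :=
  fAnd (fA t) (fAnd (fB t b) (fAnd (fC t b) (fAnd (fR t b) (fLt t b)))).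
Definition fK (t : term) (b : nat) : form :=
  fAnd (fK0 t b) (fAll b (fImp (fH (V b) (b+1)) (fH (tci (V b) t) (b+1)))).
Definition fD (t : term) (b : nat) : form :=
  fAll b (fAll (b+1) (fImp (fB (V (b+1)) (b+2)) (fImp (fEq (tci (V b) (V (b+1))) t) (fK (V b) (b+2))))).
Definition fF (t : term) (b : nat) : form :=
  fAnd (fD t b) (fEx b (fAnd (fD (V b) (b+1)) (fAnd
    (fAll (b+1) (fImp (fIn (V (b+1)) t (b+2)) (fIn (V (b+1)) (V b) (b+2))))
    (fAll (b+1) (fImp (fIn (V (b+1)) (V b) (b+2)) (fAnd (fD (V (b+1)) (b+2))
       (fAll (b+2) (fImp (fIn (V (b+2)) (V (b+1)) (b+3)) (fIn (V (b+2)) (V b) (b+3)))))))))).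

Definition Itr : translation := {|
  dim := 1;
  tr_dom := fF (tvar 0) 3;
  tr_eq := fEq (tvar 0) (tvar 1);
  tr_e := fEq (tvar 0) te;
  tr_vd := fEq (tvar 2) (tvd (tvar 0) (tvar 1));
  tr_ci := fEq (tvar 2) (tci (tvar 0) (tvar 1)) |}.

Section Conv.
Variables (M : Type) (eM : M) (vdM ciM : M -> M -> M).
Lemma dom_iff (x : nat -> M) : iDom Itr M eM vdM ciM x <-> PF M eM vdM ciM (x 0).
Proof. split; intro H; exact H. Qed.
Lemma eq_iff (x y : nat -> M) : iEq Itr M eM vdM ciM x y <-> x 0 = y 0.
Proof. split; intro H; exact H. Qed.
Lemma e_iff (x : nat -> M) : iE Itr M eM vdM ciM x <-> x 0 = eM.
Proof. split; intro H; exact H. Qed.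
Lemma vd_iff (x y z : nat -> M) : iVd Itr M eM vdM ciM x y z <-> z 0 = vdM (x 0) (y 0).
Proof. split; intro H; exact H. Qed.
Lemma ci_iff (x y z : nat -> M) : iCi Itr M eM vdM ciM x y z <-> z 0 = ciM (x 0) (y 0).
Proof. split; intro H; exact H. Qed.
End Conv.

Section Main.
Variables (M : Type) (eM : M) (vdM ciM : M -> M -> M).
Hypothesis HS : Seq_ax M (@eq M) eM vdM ciM.

Let DD := iD Itr M eM vdM ciM.
Definition val (x : iD Itr M eM vdM ciM) : M := proj1_sig x 0.
Lemma Fval x : PF M eM vdM ciM (val x).
Proof. apply (proj1 (dom_iff _ _ _ _ _)), (proj2_sig x). Qed.
Definition mk (a : M) (H : PF M eM vdM ciM a) : iD Itr M eM vdM ciM :=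
  exist _ (fun _ => a) (proj2 (dom_iff _ _ _ _ (fun _ => a)) H).
Lemma val_mk a H : val (mk a H) = a. Proof. reflexivity. Qed.
Lemma eqD x y : iEqD Itr M eM vdM ciM x y <-> val x = val y.
Proof. apply eq_iff. Qed.

Lemma model : defines_model_of Itr M eM vdM ciM SeqPlus_ax.
Proof.
  destruct HS as [s1 [s2 [s3 [s4 s5]]]].
  unfold defines_model_of.
  split; [intros x _; apply eq_iff; reflexivity|].
  split; [intros x y _ _ H; apply eq_iff; apply eq_iff in H; auto|].
  split; [intros x y z _ _ _ H1 H2; apply eq_iff; apply eq_iff in H1; apply eq_iff in H2; congruence|].
  split; [intros x x' _ _ H1 H2; apply e_iff; apply eq_iff in H1; apply e_iff in H2; congruence|].
  split; [intros x x' y y' z z' _ _ _ _ _ _ H1 H2 H3 H4; apply vd_iff;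
          apply eq_iff in H1; apply eq_iff in H2; apply eq_iff in H3; apply vd_iff in H4; congruence|].
  split; [intros x x' y y' z z' _ _ _ _ _ _ H1 H2 H3 H4; apply ci_iff;
          apply eq_iff in H1; apply eq_iff in H2; apply eq_iff in H3; apply ci_iff in H4; congruence|].
  split; [intros x x' _ _ H1 H2; apply eq_iff; apply e_iff in H1; apply e_iff in H2; congruence|].
  split; [intros x y z z' _ _ _ _ H1 H2; apply eq_iff; apply vd_iff in H1; apply vd_iff in H2; congruence|].
  split; [intros x y z z' _ _ _ _ H1 H2; apply eq_iff; apply ci_iff in H1; apply ci_iff in H2; congruence|].
  pose (e0 := mk eM ltac:(eapply F_e; eauto)).
  pose (vd0 := fun x y => mk (vdM (val x) (val y)) ltac:(eapply F_vd; eauto using Fval)).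
  pose (ci0 := fun x y => mk (ciM (val x) (val y)) ltac:(eapply F_ci; eauto using Fval)).
  exists e0, vd0, ci0.
  split; [apply e_iff; reflexivity|].
  split; [intros x y; apply vd_iff; reflexivity|].
  split; [intros x y; apply ci_iff; reflexivity|].
  assert (Kv : forall x, PK M eM vdM ciM (val x)).
  { intros x. apply (D_K _ _ _ _ s3), F_D, Fval. }
  unfold SeqPlus_ax, Seq_ax.
  split; [split; [|split; [|split; [|split]]]|split; [|split]].
  - intros x y H. apply eqD in H. apply (s1 (val x) (val y)). exact H.
  - intros x1 x2 y1 y2 H. apply eqD in H. apply s2 in H. split; apply eqD; tauto.
  - intros x. apply eqD. apply s3.
  - intros x y z. apply eqD. apply s4.
  - intros x. destruct (s5 (val x)) as [H|[y [z H]]].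
    + left. apply eqD. exact H.
    + right. pose proof (Fval x) as Fx. rewrite H in Fx.
      exists (mk y ltac:(eapply F_dnl; eauto)), (mk z ltac:(eapply F_dnr; eauto)).
      apply eqD. exact H.
  - intros x. split; apply eqD; [apply s3|]. apply (K_A _ _ _ _ _ (Kv x)).
  - intros x y z w. rewrite eqD. split.
    + intros E. simpl in E. unfold val in E. simpl in E.
      destruct (K_C _ _ _ _ _ (Kv w) (val x) (val z) (val y) (K_B _ _ _ _ _ (Kv y)) E)
        as [u [Bu [[E1 E2]|[E1 E2]]]].
      * exists (mk u ltac:(eapply F_pre; eauto using Fval)).
        left. split; apply eqD; assumption.
      * exists (mk u ltac:(eapply F_pre; eauto using Fval)).
        right. split; apply eqD; assumption.
    + intros [u [[E1 E2]|[E1 E2]]]; apply eqD in E1; apply eqD in E2;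
        change (ciM (val x) (val y) = ciM (val z) (val w));
        change (val z = ciM (val x) (val u)) in E1 || change (val x = ciM (val z) (val u)) in E1;
        change (ciM (val u) (val w) = val y) in E2 || change (ciM (val u) (val y) = val w) in E2.
      * rewrite <- E2, E1. symmetry. apply (K_B _ _ _ _ _ (Kv w)).
      * rewrite <- E2, E1. apply (K_B _ _ _ _ _ (Kv y)).
  - intros x y z [H|H]; apply eqD in H; apply eqD.
    + change (ciM (val x) (val y) = ciM (val x) (val z)) in H.
      destruct (K_C _ _ _ _ _ (Kv z) (val x) (val x) (val y) (K_B _ _ _ _ _ (Kv y)) H)
        as [u [Bu [[E1 E2]|[E1 E2]]]].
      * assert (u = eM) as ->.
        { assert (HH := K_H M eM vdM ciM ltac:(eauto) ltac:(eauto) ltac:(eauto) ltac:(eauto) _ (Kv x)). apply (HH u Bu eM). rewrite s3. auto. }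
        rewrite <- E2. apply (K_A _ _ _ _ _ (Kv z)).
      * assert (u = eM) as ->.
        { assert (HH := K_H M eM vdM ciM ltac:(eauto) ltac:(eauto) ltac:(eauto) ltac:(eauto) _ (Kv x)). apply (HH u Bu eM). rewrite s3. auto. }
        rewrite <- E2. symmetry. apply (K_A _ _ _ _ _ (Kv y)).
    + apply (K_R _ _ _ _ _ (Kv x)). exact H.
Qed.
End Main.

Theorem theorem6 : interprets Seq_ax SeqPlus_ax.
Proof.
  exists Itr. intros M eM vdM ciM HS. apply model. exact HS.
Qed.
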